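(* Let $x^t$ and $\underline x_i^t$ be generated by RGEM or by stochastic RGEM (see context), and let $x\in X$. Suppose that for some $\theta_t\ge0$, $t=1,\dots,k$, \[ \theta_t\big(m(1+\tau_t)-1\big)=\theta_{t-1}m(1+\tau_{t-1}),\qquad t=2,\dots,k. \] Then \[ \sum_{t=1}^k\theta_t\mathbb{E}[Q(x^t,x)]\le\theta_k(1+\tau_k)\sum_{i=1}^m\mathbb{E}[f_i(\underline x_i^k)]+\sum_{t=1}^k\theta_t\mathbb{E}[\mu w(x^t)-\psi(x)]-\theta_1\big(m(1+\tau_1)-1\big)\big[\langle x^0-x,\nabla f(x)\rangle+f(x)\big], \] where $Q(\underline x,x):=\langle\nabla f(x),\underline x-x\rangle+\mu w(\underline x)-\mu w(x)$ and the expectation is over all random variables of the algorithm.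
   Context: $X\subseteq\mathbb{R}^n$ closed convex; $f_i:X\to\mathbb{R}$ convex and differentiable, $i=1,\dots,m$; $f=\frac1m\sum_i f_i$; $\mu\ge0$; $w:X\to\mathbb{R}$ strongly convex with modulus 1; $\psi=f+\mu w$. In the stochastic case $f_i(x)=\mathbb{E}[F_i(x,\xi_i)]$ and an oracle returns $G_i(x,\xi)$ with $\mathbb{E}[G_i(x,\xi)]=\nabla f_i(x)$. Prox-function $P(x^0,x):=w(x)-[w(x^0)+\langle w'(x^0),x-x^0\rangle]$, prox-mapping $\mathcal M_X(g,x^0,\eta):=\operatorname{argmin}_{x\in X}\{\langle g,x\rangle+\mu w(x)+\eta P(x^0,x)\}$. RGEM: given $x^0\in X$ and nonnegative $\{\alpha_t\},\{\eta_t\},\{\tau_t\}$, set $\underline x_i^0=x^0$, $y^{-1}=y^0=\mathbf 0\in(\mathbb{R}^n)^m$. For $t=1,\dots,k$: choose $i_t$ uniformly from $\{1,\dots,m\}$ independently; $\tilde y^t=y^{t-1}+\alpha_t(y^{t-1}-y^{t-2})$; $x^t=\mathcal M_X(\tfrac1m\sum_i\tilde y_i^t,x^{t-1},\eta_t)$; $\underline x_i^t=(1+\tau_t)^{-1}(x^t+\tau_t\underline x_i^{t-1})$ if $i=i_t$, else unchanged; $y_i^t=\nabla f_i(\underline x_i^t)$ if $i=i_t$, else $y_i^t=y_i^{t-1}$. Stochastic RGEM: same but for $i=i_t$, $y_i^t=\frac1{B_t}\sum_{j=1}^{B_t}G_i(\underline x_i^t,\xi_{i,j}^t)$ with fresh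 samples. *)

(* Defs.v *)
From HB Require Import structures.
From mathcomp Require Import all_boot all_order all_algebra.
From mathcomp Require Import all_classical all_reals all_analysis.

Set Implicit Arguments.
Unset Strict Implicit.
Unset Printing Implicit Defensive.
Import Order.TTheory GRing.Theory Num.Theory.
Import numFieldNormedType.Exports.
Local Open Scope ring_scope.
Local Open Scope classical_set_scope.

Section RGEM.
Variables (R : realType) (n : nat).

Definition dotv (u v : 'rV[R]_n) : R := \sum_(j < n) u ord0 j * v ord0 j.
Definition normE (u : 'rV[R]_n) : R := Num.sqrt (dotv u u).

Definition convex_on (X : set 'rV[R]_n) (f : 'rV[R]_n -> R) : Prop :=
  forall x y l, X x -> X y -> 0 <= l <= 1 ->
    f (l *: x + (1 - l) *: y) <= l * f x + (1 - l) * f y.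

Definition strongly_convex1_on (X : set 'rV[R]_n) (f : 'rV[R]_n -> R) : Prop :=
  forall x y l, X x -> X y -> 0 <= l <= 1 ->
    f (l *: x + (1 - l) *: y) <=
      l * f x + (1 - l) * f y - l * (1 - l) / 2 * normE (x - y) ^+ 2.

Definition is_gradient (f : 'rV[R]_n -> R) (g : 'rV[R]_n) (x : 'rV[R]_n) : Prop :=
  forall e : R, 0 < e -> exists2 d : R, 0 < d &
    forall h, normE h < d -> `|f (x + h) - f x - dotv g h| <= e * normE h.

Definition is_subgradient_on (X : set 'rV[R]_n) (f : 'rV[R]_n -> R)
  (g : 'rV[R]_n) (x : 'rV[R]_n) : Prop :=
  forall y, X y -> f x + dotv g (y - x) <= f y.

Definition proxfun (w : 'rV[R]_n -> R) (w' : 'rV[R]_n -> 'rV[R]_n)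
  (x0 x : 'rV[R]_n) : R := w x - (w x0 + dotv (w' x0) (x - x0)).

Definition is_prox_point (X : set 'rV[R]_n) (mu : R) (w : 'rV[R]_n -> R)
  (w' : 'rV[R]_n -> 'rV[R]_n) (g x0 : 'rV[R]_n) (eta : R) (z : 'rV[R]_n) : Prop :=
  X z /\ forall u, X u ->
    dotv g z + mu * w z + eta * proxfun w w' x0 z <=
    dotv g u + mu * w u + eta * proxfun w w' x0 u.

Variable m : nat.

(* state of RGEM after t steps: (x^t, (xl_i^t)_i, (y_i^{t-1})_i, (y_i^t)_i) *)
Definition rgem_state : Type :=
  ('rV[R]_n * ('I_m -> 'rV[R]_n) * ('I_m -> 'rV[R]_n) * ('I_m -> 'rV[R]_n))%type.

Variables (x0 : 'rV[R]_n)
  (M : 'rV[R]_n -> 'rV[R]_n -> R -> 'rV[R]_n) (* selection of the prox-mapping M_X(g, x0, eta) *)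
  (alpha eta tau : nat -> R)
  (* ygen t i z : the gradient (estimate) of f_i at z computed at iteration t *)
  (ygen : nat -> 'I_m -> 'rV[R]_n -> 'rV[R]_n).

Definition rgem_init : rgem_state := (x0, fun _ => x0, fun _ => 0, fun _ => 0).

Definition rgem_gbar (t : nat) (st : rgem_state) : 'rV[R]_n :=
  let: (_, _, yp, y) := st in
  m%:R^-1 *: \sum_(i < m) (y i + alpha t *: (y i - yp i)).

Definition rgem_step (t : nat) (it : 'I_m) (st : rgem_state) : rgem_state :=
  let: (x, xl, yp, y) := st in
  let x' := M (rgem_gbar t st) x (eta t) in
  let xl' := fun i => if i == it then (1 + tau t)^-1 *: (x' + tau t *: xl i)
                      else xl i in
  let y' := fun i => if i == it then ygen t i (xl' i) else y i in
  (x', xl', y, y').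

(* state after running on the history h = [:: i_t; ...; i_1] (latest first) *)
Fixpoint rgem_hist (h : seq 'I_m) : rgem_state :=
  match h with
  | [::] => rgem_init
  | it :: h' => rgem_step (size h').+1 it (rgem_hist h')
  end.

Definition rgem_at (s : seq 'I_m) (t : nat) : rgem_state :=
  rgem_hist (rev (take t s)).

Definition rgem_x (s : seq 'I_m) (t : nat) : 'rV[R]_n := (rgem_at s t).1.1.1.
Definition rgem_xl (s : seq 'I_m) (t : nat) : 'I_m -> 'rV[R]_n := (rgem_at s t).1.1.2.

End RGEM.

(* Expectation over i_1,...,i_k i.i.d. uniform on {1..m} and the (independent)
   sampling randomness omega ~ P. *)
Definition rgem_expect (R : realType) (d : measure_display) (Xi : measurableType d)
  (P : probability Xi R) (m k : nat) (Z : k.-tuple 'I_m -> Xi -> R) : R :=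
  (m ^ k)%:R^-1 * \sum_(s : k.-tuple 'I_m) Rintegral P setT (Z s).

(* Main.v *)
Require Import Defs.
From HB Require Import structures.
From mathcomp Require Import all_boot all_order all_algebra.
From mathcomp Require Import all_classical all_reals all_analysis.
From mathcomp Require Import ring lra zify.
Import Order.TTheory GRing.Theory Num.Theory.
Import numFieldNormedType.Exports.
Local Open Scope ring_scope.
Local Open Scope classical_set_scope.
Set Implicit Arguments.
Unset Strict Implicit.
Unset Printing Implicit Defensive.
Section A.
Variables (R : realType) (n : nat).
Implicit Types (u v g : 'rV[R]_n).

Lemma dotvDr g u v : dotv g (u + v) = dotv g u + dotv g v.
Proof. by rewrite /dotv -big_split /=; apply: eq_bigr => j _; rewrite mxE mulrDr. Qed.
Lemma dotvZr g a u : dotv g (a *: u) = a * dotv g u.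
Proof. by rewrite /dotv mulr_sumr; apply: eq_bigr => j _; rewrite mxE mulrCA. Qed.
Lemma dotvNr g u : dotv g (- u) = - dotv g u.
Proof. by rewrite -scaleN1r dotvZr mulN1r. Qed.
Lemma dotvBr g u v : dotv g (u - v) = dotv g u - dotv g v.
Proof. by rewrite dotvDr dotvNr. Qed.
Lemma dotvC g u : dotv g u = dotv u g.
Proof. by rewrite /dotv; apply: eq_bigr => j _; rewrite mulrC. Qed.
Lemma dotvZl g a u : dotv (a *: g) u = a * dotv g u.
Proof. by rewrite dotvC dotvZr dotvC. Qed.
Lemma dotv_suml (I : Type) (r : seq I) (F : I -> 'rV[R]_n) u :
  dotv (\sum_(i <- r) F i) u = \sum_(i <- r) dotv (F i) u.
Proof.
elim: r => [|a r IH]; first by rewrite !big_nil /dotv big1 // => j _; rewrite mxE mul0r.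
by rewrite !big_cons dotvC dotvDr -IH !(dotvC u).
Qed.

Lemma dotv_ge0 u : 0 <= dotv u u.
Proof. by rewrite /dotv sumr_ge0 // => j _; rewrite -expr2 sqr_ge0. Qed.

Lemma normEZ a u : normE (a *: u) = `|a| * normE u.
Proof.
rewrite /normE dotvZr dotvZl mulrA -expr2 sqrtrM ?sqr_ge0 //.
by rewrite sqrtr_sqr.
Qed.

Lemma normE_ge0 u : 0 <= normE u.
Proof. exact: sqrtr_ge0. Qed.

Lemma grad_ineq (X : set 'rV[R]_n) f g x z :
  convex_on X f -> is_gradient f g x -> X x -> X z ->
  f x + dotv g (z - x) <= f z.
Proof.
move=> cf gf Xx Xz.
rewrite -lerBrDl; apply/ler_addgt0Pr => e e0.
set N := normE (z - x).
have N0 : 0 <= N by exact: normE_ge0.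
have N1 : 0 < N + 1 by lra.
have e'0 : 0 < e / (N + 1) by rewrite divr_gt0.
have [dl dl0 Hd] := gf _ e'0.
set h := dl / (dl + 2 * (N + 1)).
have hden : 0 < dl + 2 * (N + 1) by lra.
have h0 : 0 < h by rewrite divr_gt0.
have h1 : h <= 1 by rewrite ler_pdivrMr // mul1r; lra.
have hN : h * N < dl.
  rewrite /h mulrAC ltr_pdivrMr //.
  have : dl * N < dl * (dl + 2 * (N + 1)) by rewrite ltr_pM2l //; lra.
  by rewrite mulrC.
have Hn : normE (h *: (z - x)) < dl by rewrite normEZ ger0_norm // ltW.
have := Hd _ Hn; rewrite normEZ (ger0_norm (ltW h0)) dotvZr.
move=> /ler_normlP [H1 _].
idtac.
have := cf z x h Xz Xx; rewrite (ltW h0) h1 => /(_ isT).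
have -> : h *: z + (1 - h) *: x = x + h *: (z - x).
  by rewrite scalerBr scalerBl scale1r addrCA addrC -addrA [- _ + _]addrC.
move=> H2.
have H3 : h * dotv g (z - x) <= h * (f z - f x) + h * (e / (N + 1) * N).
  have : h * (e / (N + 1) * N) = e / (N + 1) * (h * N) by ring.
  move=> ->; rewrite mulrBr; rewrite mulrBl mul1r in H2.
  rewrite -/N in H1.
 lra.
rewrite -mulrDr ler_pM2l // in H3.
apply: (le_trans H3); rewrite lerD2l.
rewrite mulrAC ler_pdivrMr // ler_pM2l //; lra.
Qed.

End A.
Section B.
Variables (R : realType) (m : nat).
Hypothesis m0 : (0 < m)%N.

Fixpoint avgF (k : nat) (h : seq 'I_m -> R) : R :=
  match k with
  | 0 => h [::]
  | k'.+1 => m%:R^-1 * \sum_(j < m) avgF k' (fun p => h (j :: p))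
  end.

Lemma avgF_tuple k (h : seq 'I_m -> R) :
  (m ^ k)%:R^-1 * \sum_(s : k.-tuple 'I_m) h s = avgF k h.
Proof.
elim: k h => [|k IH] h /=.
  rewrite expn0 invr1 mul1r (eq_bigr (fun _ => h [::])); last first.
    by move=> s _; rewrite tuple0.
  by rewrite sumr_const card_tuple expn0.
rewrite -(eq_bigr _ (fun j _ => IH (fun p => h (j :: p)))) -mulr_sumr mulrA.
rewrite expnS natrM invfM.
congr (_ * _).
rewrite pair_big /=.
rewrite (reindex (fun p : 'I_m * k.-tuple 'I_m => [tuple of p.1 :: p.2])) /=.
  by [].
exists (fun s : k.+1.-tuple 'I_m => (thead s, [tuple of behead s])).
  by move=> [a b] _; congr pair => //; apply: val_inj.
by move=> s _; rewrite [RHS]tuple_eta.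
Qed.

Lemma avgF_ext k (h1 h2 : seq 'I_m -> R) :
  (forall s, size s = k -> h1 s = h2 s) -> avgF k h1 = avgF k h2.
Proof.
elim: k h1 h2 => [|k IH] h1 h2 H /=; first exact: H.
congr (_ * _); apply: eq_bigr => j _; apply: IH => s Hs; apply: H => /=.
by rewrite Hs.
Qed.

Lemma avgF_cat a b (h : seq 'I_m -> R) :
  avgF (a + b) h = avgF a (fun p => avgF b (fun q => h (p ++ q))).
Proof.
elim: a h => [|a IH] h //=.
congr (_ * _); apply: eq_bigr => j _.
by rewrite IH.
Qed.

Lemma avgF_cst k (c : R) : avgF k (fun _ => c) = c.
Proof.
elim: k => [|k IH] //=.
rewrite (eq_bigr (fun _ => c)); last by move=> j _; rewrite IH.
rewrite sumr_const card_ord -[c *+ m]mulr_natl mulrA mulVf ?mul1r //.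
by rewrite pnatr_eq0 -lt0n.
Qed.

Lemma avgF_lin k (c1 c2 : R) (h1 h2 : seq 'I_m -> R) :
  avgF k (fun s => c1 * h1 s + c2 * h2 s) = c1 * avgF k h1 + c2 * avgF k h2.
Proof.
elim: k h1 h2 => [|k IH] h1 h2 //=.
rewrite (eq_bigr (fun j => c1 * avgF k (fun p => h1 (j :: p)) + c2 * avgF k (fun p => h2 (j :: p)))); last first.
  by move=> j _; rewrite IH.
by rewrite big_split /= -!mulr_sumr; ring.
Qed.

Lemma avgF_sum k (I : Type) (r : seq I) (F : I -> seq 'I_m -> R) :
  avgF k (fun s => \sum_(i <- r) F i s) = \sum_(i <- r) avgF k (F i).
Proof.
elim: r => [|a r IH].
  by rewrite big_nil (avgF_ext (h2 := fun _ => 0)) ?avgF_cst // => s _; rewrite big_nil.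
rewrite big_cons -IH.
have := avgF_lin k 1 1 (F a) (fun s => \sum_(i <- r) F i s); rewrite !mul1r => <-.
by apply: avgF_ext => s _; rewrite big_cons !mul1r.
Qed.

Lemma avgF_le k (h1 h2 : seq 'I_m -> R) :
  (forall s, size s = k -> h1 s <= h2 s) -> avgF k h1 <= avgF k h2.
Proof.
elim: k h1 h2 => [|k IH] h1 h2 H /=; first exact: H.
rewrite ler_wpM2l ?invr_ge0 ?ler0n //; apply: ler_sum => j _; apply: IH => s Hs.
by apply: H => /=; rewrite Hs.
Qed.

Lemma avgF_split t k (H : seq 'I_m -> R) : (1 <= t <= k)%N ->
  avgF k H = avgF t.-1 (fun p => m%:R^-1 * \sum_(j < m) avgF (k - t) (fun q => H (p ++ j :: q))).
Proof.
move=> /andP [t1 tk].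
have -> : k = (t.-1 + (k - t).+1)%N by lia.
rewrite avgF_cat /=; apply: avgF_ext => p _.
have -> : (t.-1 + (k - t).+1 - t = k - t)%N by lia.
by [].
Qed.

End B.
Section C.
Variables (R : realType) (n m : nat).
Hypothesis m0 : (0 < m)%N.
Variables (x0 : 'rV[R]_n) (M : 'rV[R]_n -> 'rV[R]_n -> R -> 'rV[R]_n)
  (alpha eta tau : nat -> R) (yg : nat -> 'I_m -> 'rV[R]_n -> 'rV[R]_n).

Definition stp (p : seq 'I_m) := rgem_hist x0 M alpha eta tau yg (rev p).
Definition Xp p := (stp p).1.1.1.
Definition XLp p := (stp p).1.1.2.
Definition Ynext p := M (rgem_gbar alpha (size p).+1 (stp p)) (Xp p) (eta (size p).+1).

Lemma stp_rcons p j : stp (rcons p j) = rgem_step M alpha eta tau yg (size p).+1 j (stp p).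
Proof. by rewrite /stp rev_rcons /= size_rev. Qed.

Lemma Xp_rcons p j : Xp (rcons p j) = Ynext p.
Proof. by rewrite /Ynext /Xp stp_rcons; case: (stp p) => [[[a b] c] d]. Qed.

Lemma XLp_rcons p j i : XLp (rcons p j) i =
  if i == j then (1 + tau (size p).+1)^-1 *: (Ynext p + tau (size p).+1 *: XLp p i)
  else XLp p i.
Proof. by rewrite /Ynext /XLp /Xp stp_rcons; case: (stp p) => [[[a b] c] d]. Qed.

Lemma XLp_nil i : XLp [::] i = x0. Proof. by []. Qed.

Lemma sum_if i (F G : R) :
  \sum_(j < m) (if i == j then F else G) = F + (m%:R - 1) * G.
Proof.
rewrite (bigD1 i) //= eqxx; congr (_ + _).
rewrite (eq_bigr (fun _ => G)); last by move=> j /negbTE; rewrite eq_sym => ->.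
by rewrite sumr_const cardC1 card_ord -[G *+ _]mulr_natl -subn1 natrB.
Qed.

Lemma avgF_const_fun k (h : seq 'I_m -> R) c : (forall q, h q = c) -> avgF k h = c.
Proof. by move=> H; rewrite (avgF_ext (h2 := fun _ => c)) ?avgF_cst. Qed.

Lemma sum_cf kk (H : seq 'I_m -> R) (G : 'I_m -> R) p :
  (forall j q, H (p ++ j :: q) = G j) ->
  \sum_(j < m) avgF kk (fun q => H (p ++ j :: q)) = \sum_(j < m) G j.
Proof. by move=> HG; apply: eq_bigr => j _; apply: avgF_const_fun => q; rewrite HG. Qed.

Hypothesis tau0 : forall t, 0 <= tau t.
Variable gi : 'I_m -> 'rV[R]_n.
Definition aF t (s : seq 'I_m) := \sum_(i < m) dotv (gi i) (XLp (take t s) i).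
Definition bF t (s : seq 'I_m) := \sum_(i < m) dotv (gi i) (Xp (take t s)).

Lemma core t k : (1 <= t <= k)%N ->
  avgF k (bF t) = (m%:R * (1 + tau t)) * avgF k (aF t)
                    + (- (m%:R * (1 + tau t) - 1)) * avgF k (aF t.-1).
Proof.
move=> tk; rewrite !(avgF_split m0 _ tk) -avgF_lin.
apply: avgF_ext => p sp.
have ht : t = (size p).+1 by move: tk; rewrite sp; case: (t) => //.
have tk1 q j : take t (p ++ j :: q) = rcons p j.
  by rewrite ht take_cat ltnNge leqnSn /= subSnn /= take0 cats1.
have tk0 q j : take t.-1 (p ++ j :: q) = p by rewrite take_size_cat.
rewrite (@sum_cf (k - t) (bF t) (fun j => \sum_(i < m) dotv (gi i) (Xp (rcons p j))) p); last by move=> j q; rewrite /bF tk1.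
rewrite (@sum_cf (k - t) (aF t) (fun j => \sum_(i < m) dotv (gi i) (XLp (rcons p j) i)) p); last by move=> j q; rewrite /aF tk1.
rewrite (@sum_cf (k - t) (aF t.-1) (fun j => \sum_(i < m) dotv (gi i) (XLp p i)) p); last by move=> j q; rewrite /aF tk0.
under eq_bigr => j _ do rewrite Xp_rcons.
under [X in _ = _ * (_ * X) + _]eq_bigr => j _ do
  under eq_bigr => i _ do rewrite XLp_rcons (fun_if (dotv (gi i))) dotvZr dotvDr dotvZr.
rewrite [X in _ = _ * (_ * X) + _]exchange_big /=.
under [X in _ = _ * (_ * X) + _]eq_bigr => i _ do rewrite sum_if.
rewrite !sumr_const !card_ord big_split /= -!mulr_sumr big_split /= -mulr_sumr -ht.
set A := \sum_(i < m) dotv (gi i) (Ynext p).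
set B := \sum_(i < m) dotv (gi i) (XLp p i).
rewrite -[A *+ m]mulr_natl -[B *+ m]mulr_natl.
have mn0 : m%:R != 0 :> R by rewrite pnatr_eq0 -lt0n.
have tn0 : 1 + tau t != 0 by rewrite lt0r_neq0 //; have := tau0 t; lra.
field.
by rewrite mn0 tn0.
Qed.

End C.
Section D.
Local Open Scope convex_scope.
Variables (R : realType) (n : nat).

Lemma conv_in (X : set 'rV[R]_n) (a b : 'rV[R]_n) (tau : R) :
  convex_set X -> X a -> X b -> 0 <= tau -> X ((1 + tau)^-1 *: (a + tau *: b)).
Proof.
move=> cX Xa Xb t0.
have l0 : 0 <= (1 + tau)^-1 by rewrite invr_ge0; lra.
have l1 : (1 + tau)^-1 <= 1 by rewrite invf_le1; lra.
have := cX a b (Itv01 l0 l1) (mem_set Xa) (mem_set Xb).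
move=> /set_mem.
have -> : ((a : convex_lmodType 'rV[R]_n) <| Itv01 l0 l1 |> (b : convex_lmodType 'rV[R]_n)) = (1 + tau)^-1 *: a + (1 - (1 + tau)^-1) *: b by [].
have -> : 1 - (1 + tau)^-1 = (1 + tau)^-1 * tau.
  by field; rewrite lt0r_neq0 //; lra.
by rewrite scalerDr scalerA.
Qed.
End D.
Section E.
Variables (R : realType) (n m : nat).
Variables (x0 : 'rV[R]_n) (M : 'rV[R]_n -> 'rV[R]_n -> R -> 'rV[R]_n)
  (alpha eta tau : nat -> R) (yg : nat -> 'I_m -> 'rV[R]_n -> 'rV[R]_n).
Hypothesis tau0 : forall t, 0 <= tau t.

Lemma mem_XL (X : set 'rV[R]_n) (s : seq 'I_m) k :
  convex_set X -> X x0 -> size s = k ->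
  (forall t, (1 <= t <= k)%N -> X (Xp x0 M alpha eta tau yg (take t s))) ->
  forall t, (t <= k)%N -> forall i, X (XLp x0 M alpha eta tau yg (take t s) i).
Proof.
move=> cX X0 sk HX; elim=> [|t IH] tk i; first by rewrite take0.
have ts : (t < size s)%N by rewrite sk.
rewrite (take_nth i ts) XLp_rcons; case: ifP => _; last by apply: IH; lia.
apply: conv_in => //; last by apply: IH; lia.
by rewrite -(Xp_rcons _ _ _ _ _ _ _ (nth i s t)) -take_nth //; apply: HX; lia.
Qed.
End E.

Section F.
Variables (R : realType) (m : nat).

Lemma telesc (K : nat) (th tau a b : nat -> R) : (1 <= K)%N ->
  (forall t, (1 <= t <= K)%N -> b t = (m%:R * (1 + tau t)) * a t + (- (m%:R * (1 + tau t) - 1)) * a t.-1) ->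
  (forall t, (2 <= t <= K)%N -> th t * (m%:R * (1 + tau t) - 1) = th t.-1 * m%:R * (1 + tau t.-1)) ->
  \sum_(1 <= t < K.+1) th t * b t = th K * m%:R * (1 + tau K) * a K - th 1%N * (m%:R * (1 + tau 1%N) - 1) * a 0%N.
Proof.
elim: K => [//|K IH] _ Hb Hth.
case: K IH Hb Hth => [|K] IH Hb Hth.
  rewrite big_nat1 Hb //=; ring.
rewrite big_nat_recr //= IH //; last 2 first.
- by move=> t tK; apply: Hb; lia.
- by move=> t tK; apply: Hth; lia.
rewrite Hb; last by lia.
have := Hth K.+2 (ltac:(lia)); rewrite /= => H.
set c := m%:R * (1 + tau K.+2) - 1 in H *.
have -> : - c = - (m%:R * (1 + tau K.+2) - 1) by [].
transitivity (th K.+2 * m%:R * (1 + tau K.+2) * a K.+2 - th 1%N * (m%:R * (1 + tau 1%N) - 1) * a 0%N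
   + (th K.+1 * m%:R * (1 + tau K.+1) - th K.+2 * c) * a K.+1); last by rewrite H; ring.
by rewrite /c; ring.
Qed.

Lemma thsum (K : nat) (th tau : nat -> R) : (1 <= K)%N ->
  (forall t, (2 <= t <= K)%N -> th t * (m%:R * (1 + tau t) - 1) = th t.-1 * m%:R * (1 + tau t.-1)) ->
  th K * m%:R * (1 + tau K) = th 1%N * (m%:R * (1 + tau 1%N) - 1) + \sum_(1 <= t < K.+1) th t.
Proof.
elim: K => [//|K IH] _ Hth.
case: K IH Hth => [|K] IH Hth.
  rewrite big_nat1; ring.
rewrite big_nat_recr //= addrA -IH //; last by move=> t tK; apply: Hth; lia.
have := Hth K.+2 (ltac:(lia)); rewrite /= => H.
transitivity (th K.+2 * (m%:R * (1 + tau K.+2) - 1) + th K.+2); first ring.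
by rewrite H; ring.
Qed.
End F.
Section G.
Variables (R : realType) (n m : nat).
Hypothesis m0 : (0 < m)%N.
Variables (x0 : 'rV[R]_n) (M : 'rV[R]_n -> 'rV[R]_n -> R -> 'rV[R]_n)
  (alpha eta tau : nat -> R) (yg : nat -> 'I_m -> 'rV[R]_n -> 'rV[R]_n).
Hypothesis tau0 : forall t, 0 <= tau t.

Local Notation Xp := (Xp x0 M alpha eta tau yg).
Local Notation XLp := (XLp x0 M alpha eta tau yg).

Lemma avgF_addc k (h : seq 'I_m -> R) c : avgF k (fun s => h s + c) = avgF k h + c.
Proof.
have := avgF_lin k 1 c h (fun _ => 1); rewrite (avgF_cst m0) mulr1 mul1r => <-.
by apply: avgF_ext => s _; rewrite mul1r.
Qed.

Lemma det_ineq (k : nat) (X : set 'rV[R]_n) (f : 'I_m -> 'rV[R]_n -> R)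
  (gradf : 'I_m -> 'rV[R]_n -> 'rV[R]_n) (x : 'rV[R]_n) (th : nat -> R) :
  (1 <= k)%N -> convex_set X -> X x0 -> X x ->
  (forall i, convex_on X (f i)) ->
  (forall i z, X z -> is_gradient (f i) (gradf i z) z) ->
  (forall s : seq 'I_m, size s = k -> forall t, (1 <= t <= k)%N -> X (Xp (take t s))) ->
  0 <= th k ->
  (forall t, (2 <= t <= k)%N ->
     th t * (m%:R * (1 + tau t) - 1) = th t.-1 * m%:R * (1 + tau t.-1)) ->
  let gb := m%:R^-1 *: \sum_(i < m) gradf i x in
  let fb := m%:R^-1 * \sum_(i < m) f i x in
  \sum_(1 <= t < k.+1) th t * avgF k (fun s => dotv gb (Xp (take t s) - x))
  <= th k * (1 + tau k) * \sum_(i < m) avgF k (fun s => f i (XLp (take k s) i))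
     - (\sum_(1 <= t < k.+1) th t) * fb
     - th 1%N * (m%:R * (1 + tau 1%N) - 1) * (dotv (x0 - x) gb + fb).
Proof.
move=> k1 cX X0 Xx cf gf HX thk0 Hth; cbv zeta.
set gb := m%:R^-1 *: \sum_(i < m) gradf i x.
set fb := m%:R^-1 * \sum_(i < m) f i x.
set gi := fun i => gradf i x.
set dg := dotv gb x.
set dg0 := dotv gb x0.
have mn0 : m%:R != 0 :> R by rewrite pnatr_eq0 -lt0n.
have dotgb y : dotv gb y = m%:R^-1 * \sum_(i < m) dotv (gi i) y.
  by rewrite /gb dotvZl dotv_suml.
have F1 t : avgF k (fun s => dotv gb (Xp (take t s) - x)) =
            m%:R^-1 * avgF k (bF x0 M alpha eta tau yg gi t) - dg.
  have := avgF_lin k (m%:R^-1) (- dg) (bF x0 M alpha eta tau yg gi t) (fun _ => 1).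
  rewrite (avgF_cst m0) mulr1 => <-.
  by apply: avgF_ext => s _; rewrite dotvBr dotgb.
set A := fun t => avgF k (aF x0 M alpha eta tau yg gi t).
set B := fun t => avgF k (bF x0 M alpha eta tau yg gi t).
set S := \sum_(1 <= t < k.+1) th t.
have E1 : \sum_(1 <= t < k.+1) th t * avgF k (fun s => dotv gb (Xp (take t s) - x))
          = m%:R^-1 * \sum_(1 <= t < k.+1) th t * B t - S * dg.
  rewrite mulr_sumr /S mulr_suml -sumrB; apply: eq_big_nat => t _.
  by rewrite F1 /B; ring.
have E2 : \sum_(1 <= t < k.+1) th t * B t =
   th k * m%:R * (1 + tau k) * A k - th 1%N * (m%:R * (1 + tau 1%N) - 1) * A 0%N.
  exact: (telesc k1 (fun t tk => core m0 x0 M alpha eta yg tau0 gi tk) Hth).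
have E3 := thsum k1 Hth.
have A0 : A 0%N = m%:R * dg0.
  rewrite /A (@avgF_const_fun R m m0 k _ (\sum_(i < m) dotv (gi i) x0)); last first.
    by move=> q; rewrite /aF take0.
  by rewrite /dg0 dotgb mulrA mulfV // mul1r.
set V := \sum_(i < m) avgF k (fun s => f i (XLp (take k s) i)).
have Ak : A k <= V - m%:R * fb + m%:R * dg.
  have -> : V - m%:R * fb + m%:R * dg =
     \sum_(i < m) (avgF k (fun s => f i (XLp (take k s) i)) + (dotv (gi i) x - f i x)).
    rewrite big_split /= sumrB /fb /dg dotgb !mulrA mulfV // !mul1r /V; ring.
  rewrite (eq_bigr (fun i => avgF k (fun s => f i (XLp (take k s) i) + (dotv (gi i) x - f i x)))); last first.
    by move=> i _; rewrite avgF_addc.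
  rewrite /A /aF -(avgF_sum m0); apply: avgF_le => s sk.
  apply: ler_sum => i _.
  have Xz : X (XLp (take k s) i).
    exact: (@mem_XL R n m x0 M alpha eta tau yg tau0 X s k cX X0 sk (HX s sk) k (leqnn k) i).
  have := grad_ineq (cf i) (gf i x Xx) Xx Xz.
  rewrite dotvBr /gi; lra.
rewrite E1 E2 A0.
have Ed : dotv (x0 - x) gb = dg0 - dg by rewrite dotvC dotvBr.
rewrite Ed.
set c := th 1%N * (m%:R * (1 + tau 1%N) - 1) in E3 *.
have ES : S = th k * m%:R * (1 + tau k) - c.
  by rewrite /S E3 addrAC subrr add0r.
rewrite ES -subr_ge0.
have -> : th k * (1 + tau k) * V - (th k * m%:R * (1 + tau k) - c) * fb - c * (dg0 - dg + fb)
  - (m%:R^-1 * (th k * m%:R * (1 + tau k) * A k - c * (m%:R * dg0)) - (th k * m%:R * (1 + tau k) - c) * dg)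
  = th k * (1 + tau k) * (V - A k - m%:R * fb + m%:R * dg).
  by field.
apply: mulr_ge0; last by lra.
by apply: mulr_ge0 => //; have := tau0 k; lra.
Qed.
End G.
Section H.
Variables (R : realType) (d : measure_display) (Xi : measurableType d) (P : probability Xi R).

Definition intg (g : Xi -> R) := P.-integrable setT (EFin \o g).

Lemma intg_cst c : intg (fun _ => c).
Proof. exact: finite_measure_integrable_cst. Qed.

Lemma Rint_cst c : Rintegral P setT (fun _ => c) = c.
Proof.
rewrite Rintegral_cst // (_ : fine _ = 1) ?mulr1 //.
exact: (congr1 fine (probability_setT P)).
Qed.

Lemma intgD g1 g2 : intg g1 -> intg g2 -> intg (fun om => g1 om + g2 om).
Proof.
move=> h1 h2; apply: eq_integrable (integrableD _ h1 h2) => //; move=> om _;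
by rewrite /= ?EFinD.
Qed.

Lemma intgZ c g : intg g -> intg (fun om => c * g om).
Proof.
move=> h; apply: eq_integrable (integrableZl _ c h) => //; move=> om _;
by rewrite /= ?EFinM.
Qed.

Lemma intgB g1 g2 : intg g1 -> intg g2 -> intg (fun om => g1 om - g2 om).
Proof.
move=> h1 h2; apply: eq_integrable (integrableB _ h1 h2) => //; move=> om _;
by rewrite /= ?EFinB.
Qed.

Lemma Rint_lin (I : eqType) (r : seq I) (c : I -> R) (g : I -> Xi -> R) :
  (forall i, i \in r -> intg (g i)) ->
  intg (fun om => \sum_(i <- r) c i * g i om) /\
  Rintegral P setT (fun om => \sum_(i <- r) c i * g i om) =
  \sum_(i <- r) c i * Rintegral P setT (g i).
Proof.
elim: r => [|a r IH] H.
  have -> : (fun om => \sum_(i <- [::]) c i * g i om) = fun _ => 0.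
    by apply: funext => om; rewrite big_nil.
  by rewrite big_nil; split; [exact: intg_cst | exact: Rint_cst].
have [I1 E1] := IH (fun i ir => H i (ltac:(by rewrite inE ir orbT))).
have Ia : intg (g a) by apply: H; rewrite mem_head.
have -> : (fun om => \sum_(i <- a :: r) c i * g i om) =
          fun om => c a * g a om + \sum_(i <- r) c i * g i om.
  by apply: funext => om; rewrite big_cons.
split; first by apply: intgD => //; exact: intgZ.
rewrite big_cons RintegralD //; last exact: intgZ.
by rewrite RintegralZl // E1.
Qed.

Definition Avg (m k : nat) (Z : k.-tuple 'I_m -> Xi -> R) (om : Xi) : R :=
  (m ^ k)%:R^-1 * \sum_(s : k.-tuple 'I_m) Z s om.

Lemma E_eq (m k : nat) (Z : k.-tuple 'I_m -> Xi -> R) : (forall s, intg (Z s)) ->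
  rgem_expect P Z = Rintegral P setT (Avg Z) /\ intg (Avg Z).
Proof.
move=> HZ.
have [I1 E1] := @Rint_lin _ (index_enum (k.-tuple 'I_m)) (fun _ => (m ^ k)%:R^-1) Z (fun s _ => HZ s).
have eA : Avg Z = (fun om => \sum_(i <- index_enum (k.-tuple 'I_m)) (m ^ k)%:R^-1 * Z i om).
  by apply: funext => om; rewrite /Avg mulr_sumr.
rewrite eA; split => //.
by rewrite E1 /rgem_expect mulr_sumr.
Qed.
End H.
Unset Implicit Arguments.
Set Strict Implicit.
Theorem lemma4p2
  (R : realType) (n m k : nat)
  (X : set 'rV[R]_n) (f : 'I_m -> 'rV[R]_n -> R) (gradf : 'I_m -> 'rV[R]_n -> 'rV[R]_n)
  (mu : R) (w : 'rV[R]_n -> R) (w' : 'rV[R]_n -> 'rV[R]_n)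
  (M : 'rV[R]_n -> 'rV[R]_n -> R -> 'rV[R]_n)
  (x0 : 'rV[R]_n) (alpha eta tau theta : nat -> R)
  (* randomness of the stochastic oracle *)
  (d : measure_display) (Xi : measurableType d) (P : probability Xi R)
  (S : Type) (G : 'I_m -> 'rV[R]_n -> S -> 'rV[R]_n) (xi : Xi -> nat -> 'I_m -> nat -> S)
  (B : nat -> nat)
  (ygen : Xi -> nat -> 'I_m -> 'rV[R]_n -> 'rV[R]_n)
  (x : 'rV[R]_n) :
  (0 < m)%N -> (1 <= k)%N ->
  closed X -> convex_set X ->
  (forall i, convex_on X (f i)) ->
  (forall i z, X z -> is_gradient (f i) (gradf i z) z) ->
  0 <= mu -> strongly_convex1_on X w ->
  (forall z, X z -> is_subgradient_on X w (w' z) z) ->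
  X x0 ->
  (forall t, 0 <= alpha t) -> (forall t, 0 <= eta t) -> (forall t, 0 <= tau t) ->
  (* RGEM (exact gradients) or stochastic RGEM (mini-batch of oracle calls) *)
  ((forall om t i z, ygen om t i z = gradf i z) \/
   ((forall t, (0 < B t)%N) /\
    forall om t i z, ygen om t i z =
      (B t)%:R^-1 *: \sum_(j < B t) G i z (xi om t i j))) ->
  (* x^t is a point of the prox-mapping M_X(gbar^t, x^{t-1}, eta_t) *)
  (forall (s : k.-tuple 'I_m) om t, (1 <= t <= k)%N ->
     is_prox_point X mu w w'
       (rgem_gbar alpha t (rgem_at x0 M alpha eta tau (ygen om) s t.-1))
       (rgem_x x0 M alpha eta tau (ygen om) s t.-1) (eta t)
       (rgem_x x0 M alpha eta tau (ygen om) s t)) ->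
  (* the expectations below exist *)
  (forall (s : k.-tuple 'I_m) t, (1 <= t <= k)%N ->
     P.-integrable setT (fun om =>
       (dotv (m%:R^-1 *: \sum_(i < m) gradf i x)
          (rgem_x x0 M alpha eta tau (ygen om) s t - x)
        + mu * w (rgem_x x0 M alpha eta tau (ygen om) s t) - mu * w x)%:E)) ->
  (forall (s : k.-tuple 'I_m) t, (1 <= t <= k)%N ->
     P.-integrable setT (fun om =>
       (mu * w (rgem_x x0 M alpha eta tau (ygen om) s t))%:E)) ->
  (forall (s : k.-tuple 'I_m) i,
     P.-integrable setT (fun om =>
       (f i (rgem_xl x0 M alpha eta tau (ygen om) s k i))%:E)) ->
  X x ->
  (forall t, (1 <= t <= k)%N -> 0 <= theta t) ->
  (forall t, (2 <= t <= k)%N ->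
     theta t * (m%:R * (1 + tau t) - 1) = theta t.-1 * m%:R * (1 + tau t.-1)) ->
  let fbar := fun z => m%:R^-1 * \sum_(i < m) f i z in
  let gradfbar := fun z => m%:R^-1 *: \sum_(i < m) gradf i z in
  let psi := fun z => fbar z + mu * w z in
  let Q := fun xl z => dotv (gradfbar z) (xl - z) + mu * w xl - mu * w z in
  let E := rgem_expect P (k := k) in
  \sum_(1 <= t < k.+1)
     theta t * E (fun s om => Q (rgem_x x0 M alpha eta tau (ygen om) s t) x)
  <= theta k * (1 + tau k) *
       \sum_(i < m) E (fun s om => f i (rgem_xl x0 M alpha eta tau (ygen om) s k i))
     + \sum_(1 <= t < k.+1)
         theta t * E (fun s om => mu * w (rgem_x x0 M alpha eta tau (ygen om) s t) - psi x)
     - theta 1 * (m%:R * (1 + tau 1) - 1) * (dotv (x0 - x) (gradfbar x) + fbar x).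

Proof.
move=> m0 k1 Xcl cX cf gf mu0 wsc w'sub X0 al0 et0 ta0 Hyg Hprox IQ Iw If Xx th0 Hth.
cbv beta zeta.
set gb := m%:R^-1 *: \sum_(i < m) gradf i x.
set fb := m%:R^-1 * \sum_(i < m) f i x.
set c := theta 1%N * (m%:R * (1 + tau 1%N) - 1) * (dotv (x0 - x) gb + fb).
set QZ := fun t (s : k.-tuple 'I_m) om =>
  dotv gb (rgem_x x0 M alpha eta tau (ygen om) s t - x) +
  mu * w (rgem_x x0 M alpha eta tau (ygen om) s t) - mu * w x.
set UZ := fun t (s : k.-tuple 'I_m) om =>
  mu * w (rgem_x x0 M alpha eta tau (ygen om) s t) - (fb + mu * w x).
set VZ := fun i (s : k.-tuple 'I_m) om => f i (rgem_xl x0 M alpha eta tau (ygen om) s k i).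
have iQ t : (1 <= t <= k)%N -> forall s, intg P (QZ t s) by move=> tk s; exact: IQ.
have iU t : (1 <= t <= k)%N -> forall s, intg P (UZ t s).
  by move=> tk s; apply: intgB; [exact: Iw | exact: intg_cst].
have iV i s : intg P (VZ i s) by exact: If.
have [IL EL] := @Rint_lin R d Xi P nat (index_iota 1 k.+1) theta (fun t => Avg (QZ t))
    (fun t tr => (E_eq (iQ t (ltac:(by rewrite mem_index_iota in tr)))).2).
have [IU EU] := @Rint_lin R d Xi P nat (index_iota 1 k.+1) theta (fun t => Avg (UZ t))
    (fun t tr => (E_eq (iU t (ltac:(by rewrite mem_index_iota in tr)))).2).
have [IV EV] := @Rint_lin R d Xi P _ (index_enum 'I_m) (fun _ => theta k * (1 + tau k))
    (fun i => Avg (VZ i)) (fun i _ => (E_eq (iV i)).2).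
have LHSe : \sum_(1 <= t < k.+1) theta t * rgem_expect P (QZ t) =
    Rintegral P setT (fun om => \sum_(1 <= t < k.+1) theta t * Avg (QZ t) om).
  rewrite EL; apply: eq_big_nat => t tk; congr (_ * _).
  exact: (E_eq (iQ t tk)).1.
have U_e : \sum_(1 <= t < k.+1) theta t * rgem_expect P (UZ t) =
    Rintegral P setT (fun om => \sum_(1 <= t < k.+1) theta t * Avg (UZ t) om).
  rewrite EU; apply: eq_big_nat => t tk; congr (_ * _).
  exact: (E_eq (iU t tk)).1.
have V_e : theta k * (1 + tau k) * \sum_(i < m) rgem_expect P (VZ i) =
    Rintegral P setT (fun om => \sum_(i < m) theta k * (1 + tau k) * Avg (VZ i) om).
  rewrite EV mulr_sumr; apply: eq_bigr => i _; congr (_ * _).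
  exact: (E_eq (iV i)).1.
rewrite LHSe U_e V_e -(Rint_cst P c) -RintegralD // -RintegralB //.
all: try exact: intg_cst.
all: try exact: intgD.
apply: le_Rintegral => //.
- by apply: intgB; [exact: intgD | exact: intg_cst].
move=> om _ /=.
set yg := ygen om.
have AvgE (Z : k.-tuple 'I_m -> Xi -> R) (h : seq 'I_m -> R) :
    (forall s : k.-tuple 'I_m, Z s om = h s) -> Avg Z om = avgF k h.
  by move=> HZ; rewrite /Avg -(avgF_tuple k h); congr (_ * _); apply: eq_bigr => s _; exact: HZ.
have AQ t : Avg (QZ t) om =
   avgF k (fun l => dotv gb (Xp x0 M alpha eta tau yg (take t l) - x)) +
   avgF k (fun l => mu * w (Xp x0 M alpha eta tau yg (take t l))) - mu * w x.
  rewrite (AvgE _ (fun l => (1 * dotv gb (Xp x0 M alpha eta tau yg (take t l) - x) +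
      1 * (mu * w (Xp x0 M alpha eta tau yg (take t l)))) + - (mu * w x))); last first.
    by move=> s; rewrite !mul1r.
  by rewrite (avgF_addc m0) avgF_lin !mul1r.
have AU t : Avg (UZ t) om =
   avgF k (fun l => mu * w (Xp x0 M alpha eta tau yg (take t l))) - (fb + mu * w x).
  rewrite (AvgE _ (fun l => mu * w (Xp x0 M alpha eta tau yg (take t l)) + - (fb + mu * w x))) //.
  by rewrite (avgF_addc m0).
have AV i : Avg (VZ i) om = avgF k (fun l => f i (XLp x0 M alpha eta tau yg (take k l) i)).
  by apply: AvgE.
under eq_bigr => t _ do rewrite AQ.
under [X in _ <= X + _ - _]eq_bigr => i _ do rewrite AV.
under [X in _ <= _ + X - _]eq_bigr => t _ do rewrite AU.
have HX : forall s : seq 'I_m, size s = k -> forall t, (1 <= t <= k)%N ->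
    X (Xp x0 M alpha eta tau yg (take t s)).
  move=> s sk t tk; exact: (Hprox (Tuple (introT eqP sk)) om t tk).1.
have D := @det_ineq R n m m0 x0 M alpha eta tau yg ta0 k X f gradf x theta k1 cX X0 Xx cf gf HX
   (th0 k (ltac:(by rewrite k1 leqnn))) Hth.
cbv zeta in D; rewrite -/gb -/fb -/c in D.
set aL := fun t => avgF k (fun l : seq 'I_m => dotv gb (Xp x0 M alpha eta tau yg (take t l) - x)) in D *.
set aW := fun t => avgF k (fun l : seq 'I_m => mu * w (Xp x0 M alpha eta tau yg (take t l))).
set aV := fun i => avgF k (fun l : seq 'I_m => f i (XLp x0 M alpha eta tau yg (take k l) i)).
have H1 : \sum_(1 <= t < k.+1) theta t * (aL t + aW t - mu * w x) =
   \sum_(1 <= t < k.+1) theta t * aL t + \sum_(1 <= t < k.+1) theta t * (aW t - mu * w x).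
  by rewrite -big_split; apply: eq_bigr => t _ /=; ring.
have H2 : \sum_(1 <= t < k.+1) theta t * (aW t - (fb + mu * w x)) =
   \sum_(1 <= t < k.+1) theta t * (aW t - mu * w x) - (\sum_(1 <= t < k.+1) theta t) * fb.
  by rewrite mulr_suml -sumrB; apply: eq_bigr => t _ /=; ring.
have H3 : \sum_(i < m) theta k * (1 + tau k) * aV i = theta k * (1 + tau k) * \sum_(i < m) aV i.
  by rewrite mulr_sumr.
rewrite H1 H2 H3.
lra.
Qed.
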